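(* Let $a>0$ be a constant, $\sigma\in\{1,-1\}$, $J=\mathrm{diag}(1,\sigma)$, and let $\rho_n=\rho_n(s)$ (real-valued) and $q_n=q_n(s)$ (complex-valued), $n\in\mathbb{Z}$, be potentials. For a spectral parameter $\lambda$ consider the linear system $$\Psi_{n+1}=U_n(\rho_n,q_n;\lambda)\Psi_n,\qquad \Psi_{n,s}=V_n(q_n;\lambda)\Psi_n,$$ where $$U_n(\rho_n,q_n;\lambda)=\begin{bmatrix}1-\frac{\mathrm{i}a\rho_n}{\lambda} & -\sigma\frac{q_{n+1}^*-q_n^*}{\lambda}\\[4pt] \frac{q_{n+1}-q_n}{\lambda} & 1+\frac{\mathrm{i}a\rho_n}{\lambda}\end{bmatrix},\qquad V_n(q_n;\lambda)=\frac{\mathrm{i}}{4}\lambda\sigma_3+\frac{\mathrm{i}}{2}\begin{bmatrix}0&\sigma q_n^*\\ q_n&0\end{bmatrix},\qquad \sigma_3=\mathrm{diag}(1,-1).$$ Let $\lambda_1\in\mathbb{C}\setminus\mathbb{R}$ and let $|y_{1,n}\rangle=(\psi_{1,n},\phi_{1,n})^T$ be a solution of this system at $\lambda=\lambda_1$, with $\langle y_{1,n}|J|y_{1,n}\rangle\neq 0$, where $\langle y_{1,n}|=|y_{1,n}\rangle^{\dagger}$ (conjugate transpose). Define the Darboux matrix $$T_n=I+\frac{\lambda_1^*-\lambda_1}{\lambda-\lambda_1^*}P_n,\qquad P_n=\frac{|y_{1,n}\rangle\langle y_{1,n}|J}{\langle y_{1,n}|J|y_{1,n}\rangle}.$$ Then,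 for any solution $\Psi_n$ of the system above, $\Psi_n^{[1]}=T_n\Psi_n$ satisfies $$\Psi_{n+1}^{[1]}=U_n(\rho_n^{[1]},q_n^{[1]};\lambda)\Psi_n^{[1]},\qquad \Psi_{n,s}^{[1]}=V_n(q_n^{[1]};\lambda)\Psi_n^{[1]},$$ where the new potentials are given by the Bäcklund transformation $$\rho_n^{[1]}=\rho_n-\frac{2}{a}\,\partial_s\ln\!\left(\frac{E\big(\langle y_{1,n}|J|y_{1,n}\rangle\big)}{\langle y_{1,n}|J|y_{1,n}\rangle}\right),\qquad q_n^{[1]}=q_n+\frac{(\lambda_1^*-\lambda_1)\psi_{1,n}^*\phi_{1,n}}{\langle y_{1,n}|J|y_{1,n}\rangle},$$ and moreover $$|q_n^{[1]}|^2=|q_n|^2+4\sigma\,\partial_s^2\ln\!\left(\frac{\langle y_{1,n}|J|y_{1,n}\rangle}{\lambda_1^*-\lambda_1}\right).$$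
   Context: $^*$ denotes complex conjugation and $\dagger$ the conjugate transpose. $E$ denotes the shift operator $n\mapsto n+1$, i.e. $E(f_n)=f_{n+1}$. The notation $U_n(\rho_n^{[1]},q_n^{[1]};\lambda)$ means the matrix $U_n$ with $\rho_n,q_n,q_{n+1}$ replaced by $\rho_n^{[1]},q_n^{[1]},q_{n+1}^{[1]}$. This linear system is the Lax pair of the semi-discrete complex coupled dispersionless system (related to the semi-discrete complex short pulse equation via $a\rho_n=x_{n+1}-x_n$). *)

(* Defs.v *)
From Stdlib Require Import Reals ZArith.
From Coquelicot Require Import Coquelicot.
Open Scope C_scope.

Record vec2 := V2 { v1 : C ; v2 : C }.
Record mat2 := M2 { m11 : C ; m12 : C ; m21 : C ; m22 : C }.

Definition mulMV (M : mat2) (x : vec2) : vec2 :=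
  V2 (m11 M * v1 x + m12 M * v2 x) (m21 M * v1 x + m22 M * v2 x).

Definition Umat (a sigma : R) (rho : Z -> R -> R) (q : Z -> R -> C)
    (n : Z) (s : R) (lam : C) : mat2 :=
  M2 (1 - Ci * RtoC a * RtoC (rho n s) / lam)
     (- RtoC sigma * (Cconj (q (n + 1)%Z s) - Cconj (q n s)) / lam)
     ((q (n + 1)%Z s - q n s) / lam)
     (1 + Ci * RtoC a * RtoC (rho n s) / lam).

Definition Vmat (sigma : R) (q : Z -> R -> C) (n : Z) (s : R) (lam : C) : mat2 :=
  M2 (Ci / 4 * lam)
     (Ci / 2 * (RtoC sigma * Cconj (q n s)))
     (Ci / 2 * q n s)
     (- (Ci / 4 * lam)).

Definition lax_solution (a sigma : R) (rho : Z -> R -> R) (q : Z -> R -> C)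
    (lam : C) (Psi : Z -> R -> vec2) : Prop :=
  (forall (n : Z) (s : R), Psi (n + 1)%Z s = mulMV (Umat a sigma rho q n s lam) (Psi n s))
  /\ (forall (n : Z) (s : R),
        is_derive (fun t => v1 (Psi n t)) s (v1 (mulMV (Vmat sigma q n s lam) (Psi n s)))
     /\ is_derive (fun t => v2 (Psi n t)) s (v2 (mulMV (Vmat sigma q n s lam) (Psi n s)))).

(* <y|J|y> with J = diag(1, sigma); this is real: |psi|^2 + sigma |phi|^2 *)
Definition brJ (sigma : R) (y : vec2) : R :=
  Rplus (pow (Cmod (v1 y)) 2) (Rmult sigma (pow (Cmod (v2 y)) 2)).

Definition Pmat (sigma : R) (y : vec2) : mat2 :=
  let b := RtoC (brJ sigma y) in
  M2 (v1 y * Cconj (v1 y) / b)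
     (v1 y * (RtoC sigma * Cconj (v2 y)) / b)
     (v2 y * Cconj (v1 y) / b)
     (v2 y * (RtoC sigma * Cconj (v2 y)) / b).

Definition Tmat (sigma : R) (l1 : C) (y : vec2) (lam : C) : mat2 :=
  let c := (Cconj l1 - l1) / (lam - Cconj l1) in
  let P := Pmat sigma y in
  M2 (1 + c * m11 P) (c * m12 P) (c * m21 P) (1 + c * m22 P).

Definition rho1 (a sigma : R) (rho : Z -> R -> R) (y : Z -> R -> vec2)
    (n : Z) (s : R) : R :=
  (rho n s - 2 / a *
     Derive (fun t => ln (Rabs (brJ sigma (y (n + 1)%Z t) / brJ sigma (y n t)))) s)%R.

Definition q1 (sigma : R) (l1 : C) (q : Z -> R -> C) (y : Z -> R -> vec2)
    (n : Z) (s : R) : C :=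
  q n s + (Cconj l1 - l1) * Cconj (v1 (y n s)) * v2 (y n s) / RtoC (brJ sigma (y n s)).

(* Main.v *)
Require Import Defs.
From Stdlib Require Import Reals ZArith Lra.
From Coquelicot Require Import Coquelicot.
Open Scope C_scope.


Lemma isd_Re (f : R -> C) x l : is_derive f x l -> is_derive (fun t => Re (f t)) x (Re l).
Proof.
  intro H. unfold is_derive in *.
  eapply filterdiff_ext_lin.
  - exact (filterdiff_comp f (fun z : C => fst z) _ _ H (filterdiff_linear _ is_linear_fst)).
  - intro y. reflexivity.
Qed.

Lemma isd_Im (f : R -> C) x l : is_derive f x l -> is_derive (fun t => Im (f t)) x (Im l).
Proof.
  intro H. unfold is_derive in *.
  eapply filterdiff_ext_lin.
  - exact (filterdiff_comp f (fun z : C => snd z) _ _ H (filterdiff_linear _ is_linear_snd)).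
  - intro y. reflexivity.
Qed.

Lemma isd_pair (f : R -> C) x a b :
  is_derive (fun t => Re (f t)) x a -> is_derive (fun t => Im (f t)) x b ->
  is_derive f x (a, b).
Proof.
  intros Ha Hb. unfold is_derive in *.
  apply (filterdiff_ext (fun t => (Re (f t), Im (f t)))).
  { intro y. destruct (f y); reflexivity. }
  eapply filterdiff_ext_lin.
  - apply (filterdiff_comp_2 (fun t => Re (f t)) (fun t => Im (f t)) (fun u v => (u, v)) _ _ (fun u v => (u,v)) Ha Hb).
    apply filterdiff_linear. apply is_linear_prod; [apply is_linear_fst | apply is_linear_snd].
  - intro y. reflexivity.
Qed.
Lemma isd_eq {V : NormedModule R_AbsRing} (f : R -> V) x d1 d2 : is_derive f x d1 -> d1 = d2 -> is_derive f x d2.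
Proof. intros H ->; exact H. Qed.

Lemma isd_Rconst (c : R) x : is_derive (fun _ : R => c) x 0%R.
Proof. exact (is_derive_const (V := R_NormedModule) c x). Qed.

Lemma isd_Rplus (f g : R -> R) x df dg : is_derive f x df -> is_derive g x dg ->
  is_derive (fun t => (f t + g t)%R) x (df + dg)%R.
Proof. intros Hf Hg. exact (is_derive_plus f g x df dg Hf Hg). Qed.
Lemma isd_Rminus (f g : R -> R) x df dg : is_derive f x df -> is_derive g x dg ->
  is_derive (fun t => (f t - g t)%R) x (df - dg)%R.
Proof. intros Hf Hg. exact (is_derive_minus f g x df dg Hf Hg). Qed.
Lemma isd_Ropp (f : R -> R) x df : is_derive f x df ->
  is_derive (fun t => (- f t)%R) x (- df)%R.
Proof. intros Hf. exact (is_derive_opp f x df Hf). Qed.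
Lemma isd_Rmult (f g : R -> R) x df dg : is_derive f x df -> is_derive g x dg ->
  is_derive (fun t => (f t * g t)%R) x (df * g x + f x * dg)%R.
Proof. intros Hf Hg. exact (is_derive_mult f g x df dg Hf Hg Rmult_comm). Qed.

Lemma Ceq (z w : C) : Re z = Re w -> Im z = Im w -> z = w.
Proof. destruct z, w; simpl; intros -> ->; reflexivity. Qed.
Ltac ceq := apply Ceq; unfold Re, Im; cbn [fst snd Cmult Cplus Cminus Copp Cconj RtoC Ci];
  first [reflexivity | ring].

Lemma isd_Cconst (c : C) x : is_derive (fun _ : R => c) x (RtoC 0).
Proof.
  apply isd_pair; simpl; apply isd_Rconst.
Qed.

Lemma isd_Cplus (f g : R -> C) x df dg : is_derive f x df -> is_derive g x dg ->
  is_derive (fun t => f t + g t) x (df + dg).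
Proof.
  intros Hf Hg.
  eapply isd_eq. apply isd_pair.
  - apply (isd_Rplus (fun t => Re (f t)) (fun t => Re (g t))); [apply isd_Re, Hf | apply isd_Re, Hg].
  - apply (isd_Rplus (fun t => Im (f t)) (fun t => Im (g t))); [apply isd_Im, Hf | apply isd_Im, Hg].
  - destruct df, dg; reflexivity.
Qed.

Lemma isd_Cminus (f g : R -> C) x df dg : is_derive f x df -> is_derive g x dg ->
  is_derive (fun t => f t - g t) x (df - dg).
Proof.
  intros Hf Hg.
  eapply isd_eq. apply isd_pair.
  - apply (isd_Rminus (fun t => Re (f t)) (fun t => Re (g t))); [apply isd_Re, Hf | apply isd_Re, Hg].
  - apply (isd_Rminus (fun t => Im (f t)) (fun t => Im (g t))); [apply isd_Im, Hf | apply isd_Im, Hg].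
  - destruct df, dg; reflexivity.
Qed.

Lemma isd_Copp (f : R -> C) x df : is_derive f x df ->
  is_derive (fun t => - f t) x (- df).
Proof.
  intros Hf.
  eapply isd_eq. apply isd_pair.
  - apply (isd_Ropp (fun t => Re (f t))); apply isd_Re, Hf.
  - apply (isd_Ropp (fun t => Im (f t))); apply isd_Im, Hf.
  - destruct df; reflexivity.
Qed.

Lemma isd_Cmult (f g : R -> C) x df dg : is_derive f x df -> is_derive g x dg ->
  is_derive (fun t => f t * g t) x (df * g x + f x * dg).
Proof.
  intros Hf Hg.
  eapply isd_eq. apply isd_pair.
  - apply (isd_Rminus (fun t => Re (f t) * Re (g t))%R (fun t => Im (f t) * Im (g t))%R).
    
    + apply isd_Rmult. apply isd_Re; exact Hf. apply isd_Re; exact Hg.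
    + apply isd_Rmult. apply isd_Im; exact Hf. apply isd_Im; exact Hg.
  - apply (isd_Rplus (fun t => Re (f t) * Im (g t))%R (fun t => Im (f t) * Re (g t))%R).
    + apply isd_Rmult. apply isd_Re; exact Hf. apply isd_Im; exact Hg.
    + apply isd_Rmult. apply isd_Im; exact Hf. apply isd_Re; exact Hg.
  - ceq.
Qed.
Lemma isd_Cconj (f : R -> C) x df : is_derive f x df ->
  is_derive (fun t => Cconj (f t)) x (Cconj df).
Proof.
  intros Hf.
  eapply isd_eq. apply isd_pair.
  - exact (isd_Re f x df Hf).
  - exact (isd_Ropp (fun t => Im (f t)) x _ (isd_Im f x df Hf)).
  - ceq.
Qed.

Lemma isd_RtoC (g : R -> R) x dg : is_derive g x dg ->
  is_derive (fun t => RtoC (g t)) x (RtoC dg).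
Proof.
  intros H. eapply isd_eq. apply isd_pair.
  - exact H.
  - exact (isd_Rconst 0%R x).
  - ceq.
Qed.

Lemma isd_real (g : R -> R) x D : is_derive (fun t => RtoC (g t)) x D ->
  is_derive g x (Re D) /\ RtoC (Re D) = D.
Proof.
  intro H. split.
  - apply isd_Re in H. exact H.
  - apply isd_Im in H. simpl in H.
    pose proof (is_derive_unique _ _ _ H) as E1.
    pose proof (is_derive_unique _ _ _ (isd_Rconst 0%R x)) as E2.
    assert (HI : Im D = 0%R) by congruence.
    apply Ceq; [reflexivity | rewrite HI; reflexivity].
Qed.

Lemma Cinv_RtoC_all (r : R) : / RtoC r = RtoC (/ r).
Proof.
  destruct (Req_dec r 0) as [->|H].
  - apply Ceq; unfold Cinv, RtoC, Re, Im; simpl; rewrite ?Rinv_0; unfold Rdiv; ring.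
  - apply eq_sym, RtoC_inv, H.
Qed.

Lemma isd_Cdivr (f : R -> C) (g : R -> R) x df dg : is_derive f x df -> is_derive g x dg -> g x <> 0%R ->
  is_derive (fun t => f t / RtoC (g t)) x ((df * RtoC (g x) - f x * RtoC dg) / (RtoC (g x) * RtoC (g x))).
Proof.
  intros Hf Hg Hx.
  assert (Hx' : RtoC (g x) <> 0). { intro E. apply Hx. injection E. auto. }
  eapply isd_eq.
  - apply (isd_Cmult f (fun t => / RtoC (g t))). exact Hf.
    apply (is_derive_ext (fun t => RtoC (/ g t)%R) (fun t => / RtoC (g t))).
    { intro t. exact (eq_sym (Cinv_RtoC_all (g t))). }
    apply isd_RtoC, is_derive_inv; [exact Hg | exact Hx].
  - rewrite RtoC_div by (apply pow_nonzero; exact Hx).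
    rewrite RtoC_opp, RtoC_pow. simpl.
    match goal with |- @eq _ ?a ?b => change (@eq C a b) end. field. auto.
Qed.

Lemma isd_lnabs (g : R -> R) x dg : is_derive g x dg -> g x <> 0%R ->
  is_derive (fun t => ln (Rabs (g t))) x (dg / g x)%R.
Proof.
  intros Hg Hx.
  assert (Hc : @continuous R_UniformSpace R_UniformSpace g x) by (apply (ex_derive_continuous (K:=R_AbsRing) (V:=R_NormedModule)); exists dg; exact Hg).
  destruct (Rlt_or_le 0 (g x)) as [Hp | Hn].
  - assert (Hloc : locally x (fun t => 0 < g t)%R).
    { apply Hc. exists (mkposreal _ Hp). intros z Hz. 
      change (Rabs (z - g x) < g x)%R in Hz. apply Rabs_lt_between in Hz. lra. }
    apply (is_derive_ext_loc (fun t => ln (g t))).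
    { revert Hloc. apply filter_imp. intros t Ht. rewrite Rabs_pos_eq; lra. }
    eapply isd_eq. apply (is_derive_comp ln g). apply is_derive_ln. exact Hp. exact Hg.
    simpl. unfold Rdiv. change (dg * / g x = dg * / g x)%R. reflexivity.
  - assert (Hn' : (g x < 0)%R) by (destruct Hn; [auto | contradiction]).
    assert (Hloc : locally x (fun t => g t < 0)%R).
    { apply (Hc (fun y : R => (y < 0)%R)). exists (mkposreal (- g x) ltac:(lra)). intros z Hz.
      change (Rabs (z - g x) < - g x)%R in Hz. apply Rabs_lt_between in Hz. lra. }
    apply (is_derive_ext_loc (fun t => ln (- g t))).
    { revert Hloc. apply filter_imp. intros t Ht. rewrite Rabs_left; lra. }
    eapply isd_eq. apply (is_derive_comp ln (fun t => - g t)%R). apply is_derive_ln. lra.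
    apply isd_Ropp, Hg.
    simpl. change ((- dg) * / (- g x) = dg / g x)%R. field. exact Hx.
Qed.

Lemma brJ_C sg v : RtoC (brJ sg v) = v1 v * Cconj (v1 v) + RtoC sg * (v2 v * Cconj (v2 v)).
Proof. unfold brJ. rewrite RtoC_plus, RtoC_mult, !Cmod2_conj. reflexivity. Qed.

Lemma Cconj_Ci : Cconj Ci = - Ci.
Proof. ceq. Qed.
Lemma Cconj_RtoC r : Cconj (RtoC r) = RtoC r.
Proof. ceq. Qed.
Lemma Cconj_divR x r : Cconj (x / RtoC r) = Cconj x / RtoC r.
Proof. unfold Cdiv. rewrite Cmult_conj, !Cinv_RtoC_all, Cconj_RtoC. reflexivity. Qed.

Ltac conjs := repeat progress (rewrite ?Cconj_divR, ?Cplus_conj, ?Cminus_conj, ?Copp_conj, ?Cmult_conj, ?Cconj_conj, ?Cconj_Ci, ?Cconj_RtoC).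
Ltac conjs_h H := repeat progress (rewrite ?Cconj_divR, ?Cplus_conj, ?Cminus_conj, ?Copp_conj, ?Cmult_conj, ?Cconj_conj, ?Cconj_Ci, ?Cconj_RtoC in H).

Lemma Ci2 : Ci ^ 2 = - (1). Proof. simpl. ceq. Qed.
Lemma Ci3 : Ci ^ 3 = - Ci. Proof. simpl. ceq. Qed.
Lemma Ci4 : Ci ^ 4 = 1. Proof. simpl. ceq. Qed.
Lemma Ci5 : Ci ^ 5 = Ci. Proof. simpl. ceq. Qed.
Lemma Ci6 : Ci ^ 6 = - (1). Proof. simpl. ceq. Qed.
Lemma Ci7 : Ci ^ 7 = - Ci. Proof. simpl. ceq. Qed.
Lemma Ci8 : Ci ^ 8 = 1. Proof. simpl. ceq. Qed.

Ltac cchange := match goal with |- @eq _ ?a ?b => change (@eq C a b) end.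
Ltac ifix := ring_simplify; rewrite ?Ci8, ?Ci7, ?Ci6, ?Ci5, ?Ci4, ?Ci3, ?Ci2; ring.
Ltac cfield := cchange; field_simplify_eq; [ifix | ..].

Ltac dleaf := match goal with
  | |- is_derive (fun t => v1 (?Y ?N t)) ?S _ =>
      match goal with H : forall _ _, is_derive (fun t => v1 (Y _ t)) _ _ |- _ => exact (H N S) end
  | |- is_derive (fun t => v2 (?Y ?N t)) ?S _ =>
      match goal with H : forall _ _, is_derive (fun t => v2 (Y _ t)) _ _ |- _ => exact (H N S) end
  | |- is_derive (fun t => brJ ?sg (?Y ?N t)) ?S _ =>
      match goal with H : forall _ _, is_derive (fun t => brJ sg (Y _ t)) _ _ |- _ => exact (H N S) end
  end.
Ltac dstep := match goal with
  | |- is_derive (fun _ => ?c) _ _ => apply (isd_Cconst c)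
  | |- is_derive (fun t => @?f t / RtoC (@?g t)) _ _ => apply (isd_Cdivr f g)
  | |- is_derive (fun t => @?f t - @?g t) _ _ => apply (isd_Cminus f g)
  | |- is_derive (fun t => @?f t + @?g t) _ _ => apply (isd_Cplus f g)
  | |- is_derive (fun t => - @?f t) _ _ => apply (isd_Copp f)
  | |- is_derive (fun t => @?f t * @?g t) _ _ => apply (isd_Cmult f g)
  | |- is_derive (fun t => Cconj (@?f t)) _ _ => apply (isd_Cconj f)
  | |- is_derive (fun t => RtoC (@?f t)) _ _ => apply (isd_RtoC f)
  | _ => dleaf
  end.
Ltac dtac := try (dstep; dtac).

Definition Edef (sg : R) (l1 : C) (v : vec2) : C :=
  Ci / 4 * (l1 - Cconj l1) * (v1 v * Cconj (v1 v) - RtoC sg * (v2 v * Cconj (v2 v))).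

Lemma RtoC_inj' (x y : R) : RtoC x = RtoC y -> x = y.
Proof. intro H. injection H. auto. Qed.

Definition Fdef (sg : R) (v : vec2) : C :=
  v1 v * Cconj (v1 v) - RtoC sg * (v2 v * Cconj (v2 v)).

Lemma dB_lemma a sg rho q l1 y n s :
  (sg = 1%R \/ sg = (-1)%R) -> lax_solution a sg rho q l1 y ->
  is_derive (fun t => brJ sg (y n t)) s (Re (Edef sg l1 (y n s))) /\
  RtoC (Re (Edef sg l1 (y n s))) = Edef sg l1 (y n s).
Proof.
  intros Hs [_ Hy].
  assert (Hd1 : forall n s, is_derive (fun t => v1 (y n t)) s (v1 (mulMV (Vmat sg q n s l1) (y n s)))) by (intros n0 s0; exact (proj1 (Hy n0 s0))).
  assert (Hd2 : forall n s, is_derive (fun t => v2 (y n t)) s (v2 (mulMV (Vmat sg q n s l1) (y n s)))) by (intros n0 s0; exact (proj2 (Hy n0 s0))).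
  clear Hy.
  apply isd_real.
  apply (is_derive_ext (fun t => v1 (y n t) * Cconj (v1 (y n t)) + RtoC sg * (v2 (y n t) * Cconj (v2 (y n t))))).
  { intro t. symmetry. apply brJ_C. }
  eapply isd_eq; [dtac|].
  unfold mulMV, Vmat, Edef. simpl v1. simpl v2. conjs.
  match goal with |- @eq _ ?a ?b => change (@eq C a b) end.
  destruct Hs; subst sg; field.
Qed.

Lemma rho1_C a sg rho q l1 y n s :
  (0 < a)%R -> (sg = 1%R \/ sg = (-1)%R) -> lax_solution a sg rho q l1 y ->
  (forall n s, brJ sg (y n s) <> 0%R) ->
  RtoC (rho1 a sg rho y n s) = RtoC (rho n s) - RtoC 2 / RtoC a *
    (Edef sg l1 (y (n+1)%Z s) / RtoC (brJ sg (y (n+1)%Z s)) - Edef sg l1 (y n s) / RtoC (brJ sg (y n s))).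
Proof.
  intros Ha Hs Hy Hb.
  destruct (dB_lemma a sg rho q l1 y (n+1)%Z s Hs Hy) as [H1 E1].
  destruct (dB_lemma a sg rho q l1 y n s Hs Hy) as [H0 E0].
  unfold rho1.
  assert (HD : Derive (fun t => ln (Rabs (brJ sg (y (n + 1)%Z t) / brJ sg (y n t)))) s =
     (((Re (Edef sg l1 (y (n + 1)%Z s)) * brJ sg (y n s) - brJ sg (y (n + 1)%Z s) * Re (Edef sg l1 (y n s))) / (brJ sg (y n s))^2)
      / (brJ sg (y (n + 1)%Z s) / brJ sg (y n s)))%R).
  { apply is_derive_unique. apply (isd_lnabs (fun t => brJ sg (y (n+1)%Z t) / brJ sg (y n t))%R). apply (is_derive_div (fun t => brJ sg (y (n+1)%Z t)) (fun t => brJ sg (y n t))); auto.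
    unfold Rdiv; apply Rmult_integral_contrapositive_currified; [apply Hb | apply Rinv_neq_0_compat, Hb]. }
  rewrite HD.
  pose proof (Hb n s) as B0. pose proof (Hb (n+1)%Z s) as B1.
  assert (Ha' : a <> 0%R) by lra.
  transitivity (RtoC (rho n s - 2 / a * (Re (Edef sg l1 (y (n + 1)%Z s)) / brJ sg (y (n + 1)%Z s)
      - Re (Edef sg l1 (y n s)) / brJ sg (y n s)))%R).
  { f_equal. field. auto. }
  rewrite RtoC_minus, RtoC_mult, RtoC_minus, !RtoC_div by auto.
  rewrite E1, E0. reflexivity.
Qed.

Theorem proposition1 (a sigma : R) (rho : Z -> R -> R) (q : Z -> R -> C)
    (l1 : C) (y : Z -> R -> vec2) :
  (0 < a)%R ->
  (sigma = 1%R \/ sigma = (-1)%R) ->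
  Im l1 <> 0%R ->
  lax_solution a sigma rho q l1 y ->
  (forall (n : Z) (s : R), brJ sigma (y n s) <> 0%R) ->
  (forall (lam : C) (Psi : Z -> R -> vec2),
      lam <> RtoC 0 -> lam <> Cconj l1 ->
      lax_solution a sigma rho q lam Psi ->
      lax_solution a sigma (rho1 a sigma rho y) (q1 sigma l1 q y) lam
        (fun n s => mulMV (Tmat sigma l1 (y n s) lam) (Psi n s)))
  /\ (forall (n : Z) (s : R),
      (Cmod (q1 sigma l1 q y n s) ^ 2 =
       Cmod (q n s) ^ 2 + 4 * sigma *
         Derive (fun t => Derive (fun u =>
            ln (Cmod (RtoC (brJ sigma (y n u)) / (Cconj l1 - l1)))) t) s)%R).
Proof.
  intros Ha Hs Hl1 Hy Hb.
  assert (HdB : forall n s, is_derive (fun t => brJ sigma (y n t)) s (Re (Edef sigma l1 (y n s))))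
    by (intros; apply (dB_lemma a sigma rho q l1 y n s Hs Hy)).
  assert (HE : forall n s, RtoC (Re (Edef sigma l1 (y n s))) = Edef sigma l1 (y n s))
    by (intros; apply (dB_lemma a sigma rho q l1 y n s Hs Hy)).
  assert (Hrho : forall n s, RtoC (rho1 a sigma rho y n s) = RtoC (rho n s) - RtoC 2 / RtoC a *
    (Edef sigma l1 (y (n+1)%Z s) / RtoC (brJ sigma (y (n+1)%Z s)) - Edef sigma l1 (y n s) / RtoC (brJ sigma (y n s))))
    by (intros; apply rho1_C with q; auto).
  assert (Hl10 : l1 <> 0). { intro E. apply Hl1. rewrite E. reflexivity. }
  assert (Hl1c : Cconj l1 <> 0). { intro E. apply Hl1. apply (f_equal Im) in E. rewrite im_conj in E. simpl in E. lra. }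
  assert (Hl1d : Cconj l1 - l1 <> 0).
  { intro E. apply Hl1. apply (f_equal Im) in E. destruct l1 as [u v]. simpl in *. lra. }
  assert (Ha0 : RtoC a <> 0). { intro E. injection E. lra. }
  assert (HbC : forall n s, RtoC (brJ sigma (y n s)) <> 0). { intros n s E. apply (Hb n s). injection E. auto. }
  pose proof (fun x => Cdiv_conj x l1 Hl10) as Hcd.
  assert (Hrho' : forall n s, Ci * RtoC a * RtoC (rho1 a sigma rho y n s) = Ci * RtoC a * RtoC (rho n s)
     + (l1 - Cconj l1) / 2 * (Fdef sigma (y (n+1)%Z s) / RtoC (brJ sigma (y (n+1)%Z s))
                             - Fdef sigma (y n s) / RtoC (brJ sigma (y n s)))).
  { intros n s. rewrite Hrho. unfold Edef, Fdef. pose proof (HbC n s). pose proof (HbC (n+1)%Z s).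
    cfield; repeat split; auto. }
  destruct Hy as [Hyd Hyds].
  assert (Hd1 : forall n s, is_derive (fun t => v1 (y n t)) s (v1 (mulMV (Vmat sigma q n s l1) (y n s))))
    by (intros n0 s0; exact (proj1 (Hyds n0 s0))).
  assert (Hd2 : forall n s, is_derive (fun t => v2 (y n t)) s (v2 (mulMV (Vmat sigma q n s l1) (y n s))))
    by (intros n0 s0; exact (proj2 (Hyds n0 s0))).
  split.
  - intros lam Psi Hl0 Hlc [HPd HPds].
    assert (Hlc2 : lam - Cconj l1 <> 0). { intro E. apply Hlc. transitivity ((lam - Cconj l1) + Cconj l1); [ring | rewrite E; ring]. }
    split.
    { intros n s.
      pose proof (HbC (n+1)%Z s) as Hb1. pose proof (HbC n s) as Hb0.
      unfold Umat. rewrite Hrho'. unfold q1, Tmat, Pmat, Fdef. cbv zeta.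
      rewrite HPd. conjs. rewrite ?Hcd. conjs.
      rewrite !brJ_C. rewrite !brJ_C in Hb1, Hb0. rewrite Hyd in Hb1 |- *.
      unfold mulMV, Umat in Hb1 |- *. cbn [v1 v2 m11 m12 m21 m22] in Hb1 |- *.
      conjs. rewrite ?Hcd. conjs.
      conjs_h Hb1. rewrite ?Hcd in Hb1. conjs_h Hb1.
      destruct Hs; subst sigma; f_equal; cchange; field; cbv beta; repeat split; auto.
      all: try (intro E; match type of E with ?z = _ => first
        [ apply Hb0; transitivity z; [cchange; ring | exact E]
        | apply Hb1; transitivity (z / (l1 * Cconj l1)); [cchange; field; auto | rewrite E; cchange; field; auto] ] end). }
    { assert (HPd1 : forall n s, is_derive (fun t => v1 (Psi n t)) s (v1 (mulMV (Vmat sigma q n s lam) (Psi n s))))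
        by (intros n0 s0; exact (proj1 (HPds n0 s0))).
      assert (HPd2 : forall n s, is_derive (fun t => v2 (Psi n t)) s (v2 (mulMV (Vmat sigma q n s lam) (Psi n s))))
        by (intros n0 s0; exact (proj2 (HPds n0 s0))).
      intros n s. pose proof (HbC n s) as Hb0. rewrite brJ_C in Hb0.
      split; unfold mulMV, Tmat, Pmat; cbv zeta; cbn [v1 v2 m11 m12 m21 m22];
        (eapply isd_eq; [dtac | ]); try apply Hb; cbv beta;
        rewrite HE; unfold q1, Vmat, Edef, mulMV; cbn [v1 v2 m11 m12 m21 m22];
        conjs; rewrite !brJ_C; 
        destruct Hs; subst sigma; cchange; field; repeat split; auto;
        intro E; match type of E with ?z = _ => apply Hb0; transitivity z; [cchange; ring | exact E] end. }
  - intros n s.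
    assert (Hcm : Cmod (Cconj l1 - l1) <> 0%R).
    { intro E. apply Hl1d. apply Cmod_eq_0. exact E. }
    assert (Hin : forall t, Derive (fun u => ln (Cmod (RtoC (brJ sigma (y n u)) / (Cconj l1 - l1)))) t
                 = (Re (Edef sigma l1 (y n t)) / brJ sigma (y n t))%R).
    { intro t. apply is_derive_unique.
      apply (is_derive_ext (fun u => ln (Rabs (brJ sigma (y n u) * / Cmod (Cconj l1 - l1))))).
      { intro u. rewrite Cmod_div by exact Hl1d. rewrite Cmod_R. rewrite Rabs_mult, Rabs_inv, (Rabs_pos_eq (Cmod (Cconj l1 - l1))) by apply Cmod_ge_0.
        reflexivity. }
      eapply isd_eq. apply (isd_lnabs (fun u => brJ sigma (y n u) * / Cmod (Cconj l1 - l1))%R).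
      apply (isd_Rmult (fun u => brJ sigma (y n u)) (fun _ => / Cmod (Cconj l1 - l1))%R).
      apply HdB. apply isd_Rconst.
      apply Rmult_integral_contrapositive_currified; [apply Hb | apply Rinv_neq_0_compat, Hcm].
      match goal with |- @eq _ ?a ?b => change (@eq R a b) end. simpl. field. split; [apply Hb | exact Hcm]. }
    rewrite (Derive_ext (fun t => Derive (fun u => ln (Cmod (RtoC (brJ sigma (y n u)) / (Cconj l1 - l1)))) t) _ s Hin).
    evar (DE : C).
    assert (HDE : is_derive (fun t => Edef sigma l1 (y n t)) s DE).
    { unfold Edef. subst DE. dtac. }
    assert (HDE' : is_derive (fun t => RtoC (Re (Edef sigma l1 (y n t)))) s DE).
    { apply (is_derive_ext (fun t => Edef sigma l1 (y n t))). intro t. symmetry. apply HE. exact HDE. }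
    destruct (isd_real _ _ _ HDE') as [HDr HDc].
    rewrite (is_derive_unique _ _ _ (is_derive_div _ _ _ _ _ HDr (HdB n s) (Hb n s))).
    pose proof (Hb n s) as Hb0.
    apply RtoC_inj'.
    rewrite RtoC_plus, RtoC_mult, !Cmod2_conj, RtoC_mult, RtoC_div by (apply pow_nonzero; exact Hb0).
    rewrite RtoC_minus, !RtoC_mult, RtoC_pow, HE, HDc.
    pose proof (HbC n s) as HbC0. rewrite brJ_C in HbC0 |- *.
    subst DE. unfold q1, Edef, mulMV, Vmat. cbn [v1 v2 m11 m12 m21 m22]. conjs.
    rewrite !brJ_C.
    destruct Hs; subst sigma; cfield; repeat split; auto;
      intro E; match type of E with ?z = _ => apply HbC0; transitivity z; [cchange; ring | exact E] end.
Qed.
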